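(* There are absolute constants $c_1>0$ and $c_2>0$ such that the following holds. Let $p$ be a prime and let $A\subset \mathbb F_p$ with $|A|=\delta p$, where $\delta >c_1 p^{-\frac 1{15}}$. Then there exist $x\in A$ and $y\in \mathbb F_p^*$ such that $x,\ x+y,\ x+y^2 \in A$; in fact the number of such triplets $(x, x+y, x+y^2)$ (i.e. of pairs $(x,y)\in\mathbb F_p\times\mathbb F_p^*$ with $x,x+y,x+y^2\in A$) is at least $c_2\,\delta^3p^2$.
   Context: $\mathbb F_p$ is the field with $p$ elements and $\mathbb F_p^*=\mathbb F_p\setminus\{0\}$. *)

(* Defs.v *)
From mathcomp Require Import all_boot all_order all_algebra.
From Stdlib Require Import Reals.
Set Implicit Arguments. Unset Strict Implicit. Unset Printing Implicit Defensive.
Import GRing.Theory.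
Local Open Scope ring_scope.

Definition triplet_pairs (p : nat) (A : {set 'F_p}) : {set 'F_p * 'F_p} :=
  [set xy : 'F_p * 'F_p | [&& xy.2 != 0, xy.1 \in A, (xy.1 + xy.2) \in A
                            & (xy.1 + xy.2 ^+ 2) \in A]].

Definition num_triplets (p : nat) (A : {set 'F_p}) : nat := #|triplet_pairs A|.

(* Main.v *)
Require Import Defs.
From mathcomp Require Import all_boot all_order all_algebra.
From Stdlib Require Import Reals.
Import GRing.Theory.
Delimit Scope ring_scope with mcR.
From Stdlib Require Import Lra.

Lemma INR_expn n k : INR (expn n k) = (INR n ^ k)%R.
Proof.
elim: k => [|k IH]; first by rewrite expn0.
by rewrite expnS mult_INR IH.
Qed.

Lemma pow_lt_mono (x y : R) n : (0 <= x)%R -> (x < y)%R -> (x ^ (S n) < y ^ (S n))%R.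
Proof.
move=> x0 xy; elim: n => [|n IH]; first by rewrite /= !Rmult_1_r.
rewrite [(x ^ _)%R]/= [(y ^ (S (S n)))%R]/=.
apply: Rmult_le_0_lt_compat; [exact: x0 | exact: (Rmult_le_pos _ _ x0 (pow_le _ _ x0)) | exact: xy | exact: IH].
Qed.

Lemma hyp_to_nat (p a : nat) : (0 < INR p)%R ->
  (INR a / INR p > 4 * Rpower (INR p) (- (1 / 15)))%R ->
  (expn 4 15 * expn p 14 < expn a 15)%N.
Proof.
move=> x0 Hd.
set x := INR p in x0 Hd *.
set r := Rpower x (- (1 / 15)).
have r0 : (0 < r)%R by rewrite /r /Rpower; exact: exp_pos.
have r15 : (r ^ 15 = / x)%R.
  rewrite /r -(Rpower_pow 15) ?Rpower_mult; last by rewrite /Rpower; exact: exp_pos.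
  have -> : (- (1 / 15) * INR 15 = - 1)%R by rewrite /=; field.
  by rewrite Rpower_Ropp Rpower_1.
have h : ((4 * r) ^ 15 < (INR a / x) ^ 15)%R.
  apply: (pow_lt_mono _ _ 14); last exact: Hd.
  lra.
rewrite Rpow_mult_distr r15 in h.
have h2 : (INR (expn 4 15 * expn p 14) < INR (expn a 15))%R.
  rewrite mult_INR !INR_expn -/x.
  have x15 : (0 < x ^ 15)%R by apply: pow_lt.
  have e1 : (INR 4 ^ 15 * x ^ 14 = (4 ^ 15 * / x) * x ^ 15)%R.
    rewrite /=; field; lra.
  have e2 : (INR a ^ 15 = (INR a / x) ^ 15 * x ^ 15)%R.
    rewrite /=; field; lra.
  rewrite e1 e2.
  by apply: Rmult_lt_compat_r.
by apply/ltP; apply: INR_lt.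
Qed.


Lemma real_final (a p T : R) : (0 < p)%R -> (a ^ 3 <= 2 * p * T)%R ->
  (T >= 1 / 2 * (a / p) ^ 3 * p ^ 2)%R.
Proof.
move=> p0 hR.
have e : (1 / 2 * (a / p) ^ 3 * p ^ 2 = a ^ 3 / (2 * p))%R.
  field; lra.
rewrite e; apply: Rle_ge.
apply: (Rmult_le_reg_r (2 * p)); first lra.
have -> : (a ^ 3 / (2 * p) * (2 * p) = a ^ 3)%R by field; lra.
nra.
Qed.

Lemma four_pos : (0 < 4)%R. Proof. lra. Qed.
Lemma half_pos : (0 < 1 / 2)%R. Proof. lra. Qed.

From mathcomp Require Import zify.

Lemma nat_final (p a Y : nat) : (a <= p)%N -> (expn 4 15 * expn p 14 < expn a 15)%N ->
  (expn (expn a 3 - Y) 8 <= 9 * expn p 11 * expn a 12)%N -> (3 * expn a 3 <= 4 * Y)%N.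
Proof.
move=> hap h15 hX.
have a0 : (0 < a)%N.
  case: a hap h15 hX => //; by rewrite exp0n // ltn0.
have p0 : (0 < p)%N by exact: leq_trans a0 hap.
rewrite leqNgt; apply/negP => hlt.
have h1 : (expn a 3 < 4 * (expn a 3 - Y))%N by lia.
have h2 : (expn (expn a 3) 8 < expn (4 * (expn a 3 - Y)) 8)%N by rewrite ltn_exp2r.
rewrite expnMn in h2.
have h3 : (expn a 12 * expn a 12 < (expn 4 8 * 9 * expn p 11) * expn a 12)%N.
  have e : (expn a 12 * expn a 12 = expn (expn a 3) 8)%N by rewrite -expnM -expnD.
  rewrite e; apply: (leq_trans h2).
  rewrite -(mulnA (expn 4 8) 9 (expn p 11)) -(mulnA (expn 4 8) (9 * expn p 11) (expn a 12)).
  rewrite leq_mul2l; apply/orP; right; exact: hX.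
rewrite ltn_pmul2r ?expn_gt0 ?a0 // in h3.
have h5 : (expn 4 15 * expn p 11 < expn a 12)%N.
  have e1 : (expn a 15 <= expn a 12 * expn p 3)%N.
    by rewrite -[15]/(12 + 3)%N expnD leq_mul2l leq_exp2r // hap orbT.
  have e2 : (expn 4 15 * expn p 11 * expn p 3 < expn a 12 * expn p 3)%N.
    rewrite -mulnA -expnD; exact: (leq_trans h15 e1).
  by rewrite ltn_pmul2r ?expn_gt0 ?p0 in e2.
have h6 := ltn_trans h5 h3.
have h6' : (expn 4 15 < expn 4 8 * 9)%N.
  move: h6; rewrite ltn_pmul2r; first by [].
  by rewrite expn_gt0 p0.
move: h6'; rewrite -[15]/(8 + 7)%N expnD ltn_pmul2l; last by rewrite expn_gt0.
have h7 : (expn 4 2 <= expn 4 7)%N by rewrite leq_pexp2l.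
have h8 : (9 <= expn 4 2)%N by [].
rewrite ltnNge; apply/negP; apply/negPn; exact: leq_trans h8 h7.
Qed.

Lemma nat_final2 (p a T : nat) : (a <= p)%N -> (expn 4 15 * expn p 14 < expn a 15)%N ->
  (expn (expn a 3 - p * (T + a)) 8 <= 9 * expn p 11 * expn a 12)%N -> (expn a 3 <= 2 * p * T)%N.
Proof.
move=> hap h15 hX.
have h := nat_final _ _ _ hap h15 hX.
have a0 : (0 < a)%N.
  case: a hap h15 {hX h} => //; by rewrite exp0n // ltn0.
have p0 : (0 < p)%N by exact: leq_trans a0 hap.
have ha2 : (4 * p < expn a 2)%N.
  have e1 : (expn a 15 <= expn a 2 * expn p 13)%N.
    by rewrite -[15]/(2 + 13)%N expnD leq_mul2l leq_exp2r // hap orbT.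
  have e2 : (expn 4 15 * p * expn p 13 < expn a 2 * expn p 13)%N.
    rewrite -mulnA -expnS; exact: (leq_trans h15 e1).
  rewrite ltn_pmul2r ?expn_gt0 ?p0 // in e2.
  apply: leq_ltn_trans e2; rewrite leq_mul2r; apply/orP; right.
  by rewrite -{1}(expn1 4) leq_pexp2l.
have ha3 : (4 * (p * a) <= expn a 3)%N.
  rewrite mulnA -[3]/(2 + 1)%N expnD expn1 leq_mul2r; apply/orP; right; exact: ltnW.
lia.
Qed.

From mathcomp Require Import all_field.
From mathcomp Require Import ring lra.
Import Order.TTheory Num.Theory.


Section CS.
Local Open Scope ring_scope.

Lemma cs_nonneg (I : finType) (x y : I -> algC) :
  (forall i, 0 <= x i) -> (forall i, 0 <= y i) ->
  (\sum_i x i * y i) ^+ 2 <= (\sum_i x i ^+ 2) * (\sum_i y i ^+ 2).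
Proof.
move=> hx hy.
set S := \sum_i \sum_j (x i * y j - x j * y i) ^+ 2.
have S0 : 0 <= S.
  apply: sumr_ge0 => i _; apply: sumr_ge0 => j _.
  have hr : x i * y j - x j * y i \is Num.real.
    by apply: rpredB; apply: rpredM; apply: ger0_real.
  by rewrite -(real_normK hr) exprn_ge0.
have eS : S = 2%:R * ((\sum_i x i ^+ 2) * (\sum_i y i ^+ 2) - (\sum_i x i * y i) ^+ 2).
  rewrite /S.
  have e1 : forall i j, (x i * y j - x j * y i) ^+ 2 =
     x i ^+ 2 * y j ^+ 2 + x j ^+ 2 * y i ^+ 2 - 2%:R * ((x i * y i) * (x j * y j)).
    by move=> i j; ring.
  have split3 : forall (f g h : I -> I -> algC),
    \sum_i \sum_j (f i j + g i j - 2%:R * h i j) =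
    \sum_i \sum_j f i j + \sum_i \sum_j g i j - 2%:R * \sum_i \sum_j h i j.
    move=> f g h.
    rewrite (eq_bigr (fun i => \sum_j f i j + \sum_j g i j - 2%:R * \sum_j h i j)).
      by rewrite sumrB big_split /= mulr_sumr.
    by move=> i _; rewrite sumrB big_split /= mulr_sumr.
  rewrite (eq_bigr (fun i => \sum_j (x i ^+ 2 * y j ^+ 2 + x j ^+ 2 * y i ^+ 2 - 2%:R * ((x i * y i) * (x j * y j))))); last first.
    by move=> i _; apply: eq_bigr => j _; rewrite e1.
  rewrite split3.
  have e2 : \sum_i \sum_j x i ^+ 2 * y j ^+ 2 = (\sum_i x i ^+ 2) * (\sum_i y i ^+ 2).
    by rewrite mulr_suml; apply: eq_bigr => i _; rewrite mulr_sumr.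
  have e3 : \sum_i \sum_j x i * y i * (x j * y j) = (\sum_i x i * y i) ^+ 2.
    by rewrite expr2 mulr_suml; apply: eq_bigr => i _; rewrite mulr_sumr.
  have e4 : \sum_i \sum_j x j ^+ 2 * y i ^+ 2 = (\sum_i x i ^+ 2) * (\sum_i y i ^+ 2).
    rewrite exchange_big /=; exact: e2.
  rewrite e2 e3 e4; ring.
move: S0; rewrite eS pmulr_rge0 ?ltr0n // subr_ge0 //.
Qed.

Lemma cs_norm (I : finType) (u v : I -> algC) :
  `|\sum_i u i * v i| ^+ 2 <= (\sum_i `|u i| ^+ 2) * (\sum_i `|v i| ^+ 2).
Proof.
apply: (le_trans _ (@cs_nonneg I (fun i => `|u i|) (fun i => `|v i|) (fun i => normr_ge0 _) (fun i => normr_ge0 _))).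
apply: lerXn2r; rewrite ?nnegrE ?normr_ge0 ?sumr_ge0 //.
  by move=> i _; rewrite mulr_ge0.
apply: (le_trans (ler_norm_sum _ _ _)).
by apply: ler_sum => i _; rewrite normrM.
Qed.
End CS.

Section Fourier.
Local Open Scope ring_scope.
Variable p : nat.
Hypothesis pP : prime p.
Hypothesis p2 : (2 < p)%nat.
Variable z : algC.
Hypothesis zP : p.-primitive_root z.
Local Notation F := 'F_p.
Definition ee (x : F) : algC := z ^+ (nat_of_ord x).

Lemma valFD (x y : F) : nat_of_ord (x + y) = ((nat_of_ord x + nat_of_ord y) %% p)%nat.
Proof.
have e : x + y = ((nat_of_ord x + nat_of_ord y)%nat)%:R :> F.
  by rewrite natrD !natr_Zp.
by rewrite e val_Fp_nat.
Qed.

Lemma eeD x y : ee (x + y) = ee x * ee y.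
Proof. by rewrite /ee valFD (prim_expr_mod zP) exprD. Qed.

Lemma ee0 : ee 0 = 1.
Proof. by rewrite /ee expr0. Qed.

Lemma ee1 : ee 1 != 1.
Proof.
rewrite /ee.
have -> : nat_of_ord (1 : F) = 1%N by rewrite -[1]/(1%:R) val_Fp_nat // modn_small // ltnW.
rewrite -[X in _ != X](expr0 z) (eq_prim_root_expr zP).
rewrite mod0n modn_small //; exact: (ltn_trans _ p2).
Qed.

Lemma eeN x : ee (- x) * ee x = 1.
Proof. by rewrite -eeD addNr ee0. Qed.

Lemma eeMn x n : ee x ^+ n = ee (x *+ n).
Proof.
elim: n => [|n IH]; first by rewrite expr0 mulr0n ee0.
by rewrite exprS IH mulrS eeD.
Qed.

Lemma ee_norm x : `|ee x| = 1.
Proof.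
have p0 : (0 < p)%nat by exact: prime_gt0.
apply/eqP; rewrite -(pexpr_eq1 p0 (normr_ge0 _)) -normrX eeMn -mulr_natr pchar_Fp_0 //.
by rewrite mulr0 ee0 normr1.
Qed.

Lemma ee_conj x : (ee x)^* = ee (- x).
Proof.
have h : ee x * (ee x)^* = 1 by rewrite -normCK ee_norm expr1n.
have nz : ee x != 0 by rewrite -normr_eq0 ee_norm oner_eq0.
apply: (mulfI nz); by rewrite h mulrC eeN.
Qed.

Lemma sum_ee k : \sum_(x : F) ee (k * x) = if k == 0 then (p%:R : algC) else 0.
Proof.
case: eqP => [->|/eqP k0].
  rewrite (eq_bigr (fun=> 1)); last by move=> x _; rewrite mul0r ee0.
  by rewrite sumr_const card_Fp.
have -> : \sum_(x : F) ee (k * x) = \sum_(x : F) ee x.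
  by rewrite [RHS](reindex_inj (mulfI k0)).
set S := \sum_(x : F) ee x.
have hS : S * ee 1 = S.
  rewrite /S mulr_suml.
  rewrite [RHS](reindex_inj (addIr 1)) /=.
  by apply: eq_bigr => x _; rewrite eeD.
have : S * (ee 1 - 1) = 0 by rewrite mulrBr mulr1 hS subrr.
by move/eqP; rewrite mulf_eq0 subr_eq0 (negPf ee1) orbF => /eqP.
Qed.

Definition P : algC := p%:R.
Lemma P_neq0 : P != 0.
Proof. by rewrite /P pnatr_eq0 -lt0n prime_gt0. Qed.
Lemma P_gt0 : 0 < P.
Proof. by rewrite /P ltr0n prime_gt0. Qed.

Definition hat (f : F -> algC) (r : F) := \sum_(x : F) f x * ee (- (r * x)).

Lemma sum_delta (f : F -> algC) w :
  \sum_(x : F) f x * (if w - x == 0 then P else 0) = f w * P.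
Proof.
rewrite (eq_bigr (fun x => if x == w then f x * P else 0)); last first.
  by move=> x _; rewrite subr_eq0 eq_sym; case: eqP => _; rewrite ?mulr0.
by rewrite -big_mkcond big_pred1_eq.
Qed.

Lemma fourier_inv f w : f w = P^-1 * \sum_t hat f t * ee (t * w).
Proof.
have -> : \sum_t hat f t * ee (t * w) = \sum_(x : F) f x * \sum_(t : F) ee ((w - x) * t).
  rewrite /hat; under eq_bigr do rewrite mulr_suml.
  rewrite exchange_big /=; apply: eq_bigr => x _; rewrite mulr_sumr.
  apply: eq_bigr => t _; rewrite -mulrA -eeD; congr (_ * ee _); ring.
under eq_bigr do rewrite sum_ee.
by rewrite sum_delta mulrC mulfK ?P_neq0.
Qed.

Lemma parseval f : \sum_s `|hat f s| ^+ 2 = P * \sum_u `|f u| ^+ 2.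
Proof.
have e1 s : `|hat f s| ^+ 2 = \sum_u \sum_v f u * (f v)^* * ee ((v - u) * s).
  rewrite normCK /hat rmorph_sum mulr_suml; apply: eq_bigr => u _.
  rewrite mulr_sumr; apply: eq_bigr => v _.
  rewrite rmorphM /=. have hc := ee_conj (- (s * v)). rewrite hc.
  have -> : ee ((v - u) * s) = ee (- (s * u)) * ee (- - (s * v)).
    by rewrite -eeD; congr ee; ring.
  by rewrite !mulrA; congr (_ * _); rewrite -!mulrA; congr (_ * _); rewrite mulrC.
under eq_bigr do rewrite e1.
rewrite exchange_big /=; rewrite mulr_sumr; apply: eq_bigr => u _.
rewrite exchange_big /=.
have -> : \sum_v \sum_s f u * (f v)^* * ee ((v - u) * s) = \sum_v (f v)^* * f u * (if u - v == 0 then P else 0).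
  apply: eq_bigr => v _; rewrite -mulr_sumr sum_ee.
  rewrite [f u * _]mulrC; congr (_ * _).
  by rewrite -oppr_eq0 opprB.
rewrite sum_delta normCK; ring.
Qed.

Lemma two_neq0 : (2 : F) != 0.
Proof.
apply/eqP => /(congr1 (@nat_of_ord _)); rewrite val_Fp_nat // modn_small //.
Qed.

Lemma quad_sq D E : D != 0 -> `|\sum_h ee (D * h ^+ 2 + E * h)| ^+ 2 = P.
Proof.
move=> D0.
rewrite normCK rmorph_sum mulr_suml /=.
have e1 k : \sum_h ee (D * h ^+ 2 + E * h) * (ee (D * k ^+ 2 + E * k))^* =
   \sum_d ee (D * d ^+ 2 + E * d) * ee ((2 * D * d) * k).
  rewrite (reindex_inj (addIr k)) /=; apply: eq_bigr => d _.
  have hc := ee_conj (D * k ^+ 2 + E * k); rewrite hc -!eeD; congr ee; ring.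
have e2 : \sum_h \sum_k ee (D * h ^+ 2 + E * h) * (ee (D * k ^+ 2 + E * k))^* =
   \sum_k \sum_h ee (D * h ^+ 2 + E * h) * (ee (D * k ^+ 2 + E * k))^*.
  by rewrite exchange_big.
under eq_bigr do rewrite mulr_sumr.
rewrite e2; under eq_bigr do rewrite e1.
rewrite exchange_big /=.
under eq_bigr do rewrite -mulr_sumr sum_ee.
have e3 : forall d : F, (2 * D * d == 0) = (0 - d == 0).
  by move=> d; rewrite !mulf_eq0 (negPf two_neq0) (negPf D0) sub0r oppr_eq0.
under eq_bigr do rewrite e3.
rewrite (sum_delta (fun d => ee (D * d ^+ 2 + E * d))).
have -> : D * 0 ^+ 2 + E * 0 = 0 by ring.
by rewrite ee0 mul1r.
Qed.

Lemma four_neq0 : (4 : F) != 0.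
Proof. by have := two_neq0; rewrite -[4]/((2 * 2)%:R) natrM mulf_eq0 negb_or => ->. Qed.

Lemma compsq (s b : F) : s != 0 ->
  \sum_y ee (s * y ^+ 2 + b * y) = ee (- (b ^+ 2 / (4 * s))) * \sum_y ee (s * y ^+ 2).
Proof.
move=> s0.
have h4 : (4 : F) != 0.
  by have := two_neq0; rewrite -[4]/((2 * 2)%:R) natrM mulf_eq0 negb_or => ->.
rewrite mulr_sumr [RHS](reindex_inj (addIr (b / (2 * s)))) /=.
apply: eq_bigr => y _; rewrite -eeD; congr ee.
field.
by rewrite two_neq0 s0 h4.
Qed.

Lemma quad_bound (D E : F) : (D != 0) || (E != 0) ->
  `|\sum_h ee (D * h ^+ 2 + E * h)| <= sqrtC P.
Proof.
case/orP => [D0|E0].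
  by rewrite -(quad_sq D E D0) sqrCK ?normr_ge0.
case: (eqVneq D 0) => [->|D0]; last by rewrite -(quad_sq D E D0) sqrCK ?normr_ge0.
have -> : \sum_h ee (0 * h ^+ 2 + E * h) = \sum_h ee (E * h).
  by apply: eq_bigr => h _; rewrite mul0r add0r.
by rewrite sum_ee (negPf E0) normr0 sqrtC_ge0 ltW ?P_gt0.
Qed.

Lemma sum3 (X : F -> algC) (Y Z : F -> F -> algC) :
  \sum_y \sum_v \sum_t X t * Y v t * Z y t = \sum_t X t * (\sum_v Y v t) * (\sum_y Z y t).
Proof.
have e : forall t, X t * (\sum_v Y v t) * (\sum_y Z y t) = \sum_y \sum_v X t * Y v t * Z y t.
  move=> t; rewrite mulr_sumr; apply: eq_bigr => y _.
  by rewrite mulr_sumr mulr_suml.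
rewrite (eq_bigr _ (fun t _ => e t)).
rewrite (eq_bigr (fun y => \sum_t \sum_v X t * Y v t * Z y t)); last first.
  by move=> y _; rewrite exchange_big.
by rewrite exchange_big.
Qed.

Variable A : {set F}.
Definition ind (x : F) : algC := (x \in A)%:R.
Definition aC : algC := (#|A|)%:R.
Definition dl : algC := aC / P.
Definition g (x : F) : algC := ind x - dl.
Definition K (h u : F) : algC := \sum_y g (u - y + y ^+ 2) * g (u - y + (y + h) ^+ 2).

Lemma hatK h s : hat (K h) s = P^-1 * \sum_t hat g t * hat g (s - t) *
   \sum_y ee (s * y ^+ 2 + (2 * t * h - s) * y + t * h ^+ 2).
Proof.
have stepA : hat (K h) s = \sum_y \sum_v g v * g (v + (2 * y * h + h ^+ 2)) * ee (- (s * (v + (y - y ^+ 2)))).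
  rewrite /hat /K.
  rewrite (eq_bigr (fun u => \sum_y g (u - y + y ^+ 2) * g (u - y + (y + h) ^+ 2) * ee (- (s * u)))); last first.
    by move=> u _; rewrite mulr_suml.
  rewrite exchange_big /=; apply: eq_bigr => y _.
  rewrite (reindex_inj (addIr (y - y ^+ 2))) /=; apply: eq_bigr => v _.
  have -> : v + (y - y ^+ 2) - y + y ^+ 2 = v by ring.
  have -> : v + (y - y ^+ 2) - y + (y + h) ^+ 2 = v + (2 * y * h + h ^+ 2) by ring.
  by [].
rewrite stepA.
rewrite (eq_bigr (fun y => \sum_v \sum_t P^-1 * (hat g t * (g v * ee (- ((s - t) * v))) *
    ee (s * y ^+ 2 + (2 * t * h - s) * y + t * h ^+ 2)))); last first.
  move=> y _; apply: eq_bigr => v _.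
  rewrite [g (v + _)]fourier_inv mulrCA mulr_sumr -(mulrA P^-1) mulr_suml mulr_sumr.
  apply: eq_bigr => t _; congr (_ * _).
  rewrite mulrCA -!mulrA; congr (_ * _); congr (_ * _).
  rewrite -!eeD; congr ee; ring.
rewrite (eq_bigr (fun y => P^-1 * \sum_v \sum_t (hat g t * (g v * ee (- ((s - t) * v))) *
    ee (s * y ^+ 2 + (2 * t * h - s) * y + t * h ^+ 2)))); last first.
  by move=> y _; rewrite mulr_sumr; apply: eq_bigr => v _; rewrite mulr_sumr.
rewrite -mulr_sumr; congr (_ * _).
rewrite (eq_bigr (fun y => \sum_v \sum_t hat g t * (g v * ee (- ((s - t) * v))) *
    ee (s * y ^+ 2 + (2 * t * h - s) * y + t * h ^+ 2))) //.
by rewrite (sum3 (hat g) (fun v t => g v * ee (- ((s - t) * v))) (fun y t => ee (s * y ^+ 2 + (2 * t * h - s) * y + t * h ^+ 2))).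
Qed.

Definition G (s : F) := \sum_y ee (s * y ^+ 2).
Definition phi (s t h : F) := t * h ^+ 2 - (2 * t * h - s) ^+ 2 / (4 * s).

Lemma G_norm s : s != 0 -> `|G s| ^+ 2 = P.
Proof.
move=> s0; rewrite -(quad_sq s 0 s0) /G; congr (`|_| ^+ 2).
by apply: eq_bigr => y _; rewrite mul0r addr0.
Qed.

Lemma H_eq s t h : s != 0 ->
  \sum_y ee (s * y ^+ 2 + (2 * t * h - s) * y + t * h ^+ 2) = ee (phi s t h) * G s.
Proof.
move=> s0.
rewrite (eq_bigr (fun y => ee (s * y ^+ 2 + (2 * t * h - s) * y) * ee (t * h ^+ 2))); last first.
  by move=> y _; rewrite -eeD.
rewrite -mulr_suml compsq // mulrC mulrA -eeD /phi; congr (ee _ * _); ring.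
Qed.

Lemma phi_diff s t t' h : s != 0 ->
  phi s t h - phi s t' h = ((t - t') * (s - t - t') / s) * h ^+ 2 + (t - t') * h.
Proof.
move=> s0; rewrite /phi; field.
by rewrite s0 four_neq0.
Qed.

Lemma sum_pick (f : F -> algC) t : \sum_t' f t' * (t' == t)%:R = f t.
Proof.
rewrite (bigD1 t) //= eqxx mulr1 big1 ?addr0 //.
by move=> i /negPf ->; rewrite mulr0.
Qed.

Lemma key_h (s : F) (c : F -> algC) : s != 0 ->
  \sum_h `|\sum_t c t * ee (phi s t h)| ^+ 2 <=
     sqrtC P * (\sum_t `|c t|) ^+ 2 + P * \sum_t `|c t| ^+ 2.
Proof.
move=> s0.
have e1 : \sum_h `|\sum_t c t * ee (phi s t h)| ^+ 2 =
   \sum_t \sum_t' c t * (c t')^* * \sum_h ee (phi s t h - phi s t' h).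
  have e0 : forall h, `|\sum_t c t * ee (phi s t h)| ^+ 2 =
      \sum_t \sum_t' c t * (c t')^* * ee (phi s t h - phi s t' h).
    move=> h; rewrite normCK rmorph_sum mulr_suml; apply: eq_bigr => t _.
    rewrite mulr_sumr; apply: eq_bigr => t' _.
    rewrite rmorphM /=.
    have hc := ee_conj (phi s t' h); rewrite hc.
    rewrite (eeD (phi s t h) (- phi s t' h)); ring.
  rewrite (eq_bigr _ (fun h _ => e0 h)).
  rewrite exchange_big /=; apply: eq_bigr => t _.
  rewrite exchange_big /=; apply: eq_bigr => t' _.
  by rewrite mulr_sumr.
have hB : forall t t', `|\sum_h ee (phi s t h - phi s t' h)| <= sqrtC P + (t' == t)%:R * P.
  move=> t t'; case: (eqVneq t' t) => [->|ne].
    rewrite (eq_bigr (fun _ => 1)); last by move=> h _; rewrite subrr ee0.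
    rewrite sumr_const card_Fp //= mul1r -/P ger0_norm ?ler0n //.
    by rewrite lerDr sqrtC_ge0 ltW ?P_gt0.
  rewrite (eq_bigr (fun h => ee (((t - t') * (s - t - t') / s) * h ^+ 2 + (t - t') * h))); last first.
    by move=> h _; rewrite phi_diff.
  rewrite mul0r addr0; apply: quad_bound.
  by rewrite orbC subr_eq0 eq_sym ne.
have Sge0 : 0 <= \sum_h `|\sum_t c t * ee (phi s t h)| ^+ 2.
  by apply: sumr_ge0 => h _; rewrite exprn_ge0.
rewrite -(ger0_norm Sge0) e1.
apply: (le_trans (ler_norm_sum _ _ _)).
apply: (le_trans (ler_sum _ (fun t _ => ler_norm_sum _ _ _))).
apply: (@le_trans _ _ (\sum_t \sum_t' `|c t| * `|c t'| * (sqrtC P + (t' == t)%:R * P))).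
  apply: ler_sum => t _; apply: ler_sum => t' _.
  rewrite !normrM norm_conjC; apply: ler_wpM2l; first by rewrite mulr_ge0.
  exact: hB.
have e2 : \sum_t \sum_t' `|c t| * `|c t'| * (sqrtC P + (t' == t)%:R * P) =
    sqrtC P * (\sum_t `|c t|) ^+ 2 + P * \sum_t `|c t| ^+ 2.
  have sq : (\sum_t `|c t|) ^+ 2 = \sum_t \sum_t' `|c t| * `|c t'|.
    by rewrite expr2 mulr_suml; apply: eq_bigr => t _; rewrite mulr_sumr.
  rewrite sq mulr_sumr mulr_sumr -big_split /=.
  apply: eq_bigr => t _.
  rewrite (eq_bigr (fun t' => sqrtC P * (`|c t| * `|c t'|) + P * `|c t| * (`|c t'| * (t' == t)%:R))); last first.
    by move=> t' _; ring.
  rewrite big_split /= -mulr_sumr -[X in _ + X]mulr_sumr sum_pick.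
  by rewrite expr2 mulrA.
by rewrite e2.
Qed.

Lemma sum_ind : \sum_x ind x = aC.
Proof.
rewrite /ind /aC -natr_sum; congr (_%:R).
rewrite (eq_bigr (fun x => if x \in A then 1%nat else 0%nat)); last by move=> x _; case: (x \in A).
by rewrite -big_mkcond /= sum1_card.
Qed.

Lemma ind_sq x : ind x ^+ 2 = ind x.
Proof. by rewrite /ind; case: (x \in A); rewrite ?expr1n ?expr0n. Qed.

Lemma ind_ge0 x : 0 <= ind x.
Proof. by rewrite /ind ler0n. Qed.

Lemma g_conj x : (g x)^* = g x.
Proof. by rewrite /g /dl /ind /aC /P rmorphB rmorphM fmorphV /= !conjC_nat. Qed.

Lemma sum_g : \sum_x g x = 0.
Proof.
rewrite /g sumrB sum_ind sumr_const card_Fp // /dl -/P.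
by rewrite -mulr_natr mulfVK ?P_neq0 // subrr.
Qed.

Lemma hat_g_neg t : hat g (- t) = (hat g t)^*.
Proof.
rewrite /hat rmorph_sum; apply: eq_bigr => x _.
rewrite rmorphM /=.
have hg := g_conj x; rewrite hg.
have hc := ee_conj (- (t * x)); rewrite hc; congr (_ * ee _); ring.
Qed.

Definition gam := \sum_x `|g x| ^+ 2.

Lemma gam_ge0 : 0 <= gam.
Proof. by apply: sumr_ge0 => x _; rewrite exprn_ge0. Qed.

Lemma gam_le : gam <= aC.
Proof.
have e : gam = aC - aC * aC / P.
  rewrite /gam (eq_bigr (fun x => ind x - 2%:R * dl * ind x + dl ^+ 2)); last first.
    move=> x _; rewrite normCK; have hg := g_conj x; rewrite hg -expr2 /g.
    have := ind_sq x; move=> hi.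
    rewrite sqrrB hi; ring.
  rewrite !big_split /= sumrN -mulr_sumr sum_ind sumr_const card_Fp // /dl -/P.
  field; exact: P_neq0.
rewrite e lerBlDr lerDl.
apply: divr_ge0; last by rewrite ltW ?P_gt0.
by apply: mulr_ge0; rewrite /aC ler0n.
Qed.

Lemma sumh_s s : s != 0 ->
  \sum_h `|hat (K h) s| ^+ 2 <=
  P^-1 * (sqrtC P * (\sum_t `|hat g t| * `|hat g (s - t)|) ^+ 2 +
          P * \sum_t (`|hat g t| * `|hat g (s - t)|) ^+ 2).
Proof.
move=> s0.
have e : forall h, `|hat (K h) s| ^+ 2 =
    P^-1 * `|\sum_t (hat g t * hat g (s - t)) * ee (phi s t h)| ^+ 2.
  move=> h; rewrite hatK.
  rewrite (eq_bigr (fun t => G s * (hat g t * hat g (s - t) * ee (phi s t h)))); last first.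
    by move=> t _; rewrite H_eq //; ring.
  rewrite -mulr_sumr mulrA normrM exprMn normrM exprMn G_norm //.
  rewrite normfV (ger0_norm (ltW P_gt0)); congr (_ * _).
  by rewrite expr2 -mulrA mulVf ?P_neq0 // mulr1.
rewrite (eq_bigr _ (fun h _ => e h)) -mulr_sumr.
apply: ler_wpM2l; first by rewrite invr_ge0 ltW ?P_gt0.
have H := key_h s (fun t => hat g t * hat g (s - t)) s0.
have e1 : \sum_t `|hat g t * hat g (s - t)| = \sum_t `|hat g t| * `|hat g (s - t)|.
  by apply: eq_bigr => t _; rewrite normrM.
have e2 : \sum_t `|hat g t * hat g (s - t)| ^+ 2 = \sum_t (`|hat g t| * `|hat g (s - t)|) ^+ 2.
  by apply: eq_bigr => t _; rewrite normrM.
by rewrite e1 e2 in H.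
Qed.

Lemma hat_g0 : hat g 0 = 0.
Proof.
rewrite /hat (eq_bigr g) ?sum_g // => x _.
by rewrite mul0r oppr0 ee0 mulr1.
Qed.

Lemma hatK0 h : hat (K h) 0 = if h == 0 then P * gam else 0.
Proof.
rewrite hatK.
have inner : forall t h, \sum_y ee (0 * y ^+ 2 + (2 * t * h - 0) * y + t * h ^+ 2) =
    ee (t * h ^+ 2) * \sum_y ee ((2 * t * h) * y).
  move=> t h'; rewrite mulr_sumr; apply: eq_bigr => y _.
  by rewrite -eeD; congr ee; ring.
case: (eqVneq h 0) => [->|h0].
  have e : forall t, hat g t * hat g (0 - t) *
      \sum_y ee (0 * y ^+ 2 + (2 * t * 0 - 0) * y + t * 0 ^+ 2) = `|hat g t| ^+ 2 * P.
    move=> t; rewrite inner sum_ee.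
    have -> : 2 * t * 0 = 0 :> F by rewrite mulr0.
    have -> : t * 0 ^+ 2 = 0 :> F by rewrite expr0n mulr0.
    rewrite eqxx -[if true then P else 0]/P ee0 mul1r sub0r.
    have hn := hat_g_neg t; rewrite hn normCK //.
  rewrite (eq_bigr _ (fun t _ => e t)).
  by rewrite -mulr_suml parseval mulrC mulfK ?P_neq0.
have e : forall t, hat g t * hat g (0 - t) *
      \sum_y ee (0 * y ^+ 2 + (2 * t * h - 0) * y + t * h ^+ 2) = 0.
  move=> t; case: (eqVneq t 0) => [->|t0]; first by rewrite hat_g0 !mul0r.
  rewrite inner sum_ee.
  have -> : (2 * t * h == 0) = false.
    by apply/negbTE; rewrite !mulf_neq0 // two_neq0.
  by rewrite mulr0 mulr0.
by rewrite (eq_bigr _ (fun t _ => e t)) big1 ?mulr0.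
Qed.

Definition S4 := \sum_h \sum_u `|K h u| ^+ 2.

Lemma sum_shift (f : F -> algC) s : \sum_t f (s - t) = \sum_t f t.
Proof. by rewrite [RHS](reindex_inj (inv_inj (subKr s))). Qed.

Lemma S4_bound : S4 <= (2%:R + sqrtC P) * P * gam ^+ 2.
Proof.
set hg := fun t => `|hat g t|.
have hg0 : forall t, 0 <= hg t by move=> t; exact: normr_ge0.
have parg : \sum_t hg t ^+ 2 = P * gam by rewrite /hg parseval.
pose Q s := \sum_h `|hat (K h) s| ^+ 2.
pose U s := \sum_t hg t * hg (s - t).
pose V s := \sum_t (hg t * hg (s - t)) ^+ 2.
have eS : S4 = P^-1 * \sum_s Q s.
  rewrite /S4 /Q [in RHS]exchange_big mulr_sumr /=; apply: eq_bigr => h _.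
  by rewrite parseval mulrA mulVf ?P_neq0 ?mul1r.
have Q0 : Q 0 = (P * gam) ^+ 2.
  rewrite /Q (bigD1 0) //= hatK0 eqxx big1 ?addr0.
    by rewrite ger0_norm // mulr_ge0 ?gam_ge0 // ltW ?P_gt0.
  by move=> h /negPf h0; rewrite hatK0 h0 normr0 expr0n.
have Qs : forall s, s != 0 -> Q s <= P^-1 * (sqrtC P * U s ^+ 2 + P * V s).
  by move=> s s0; exact: sumh_s.
have B0 : forall s, 0 <= P^-1 * (sqrtC P * U s ^+ 2 + P * V s).
  move=> s; apply: mulr_ge0; first by rewrite invr_ge0 ltW ?P_gt0.
  apply: addr_ge0; apply: mulr_ge0.
  - by rewrite sqrtC_ge0 ltW ?P_gt0.
  - by apply: exprn_ge0; apply: sumr_ge0 => t _; rewrite mulr_ge0.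
  - by rewrite ltW ?P_gt0.
  - by apply: sumr_ge0 => t _; rewrite exprn_ge0 // mulr_ge0.
have hU : \sum_s U s ^+ 2 <= P * (P * gam) ^+ 2.
  have : forall s, U s ^+ 2 <= (P * gam) ^+ 2.
    move=> s; rewrite /U.
    apply: (le_trans (@cs_nonneg _ hg (fun t => hg (s - t)) hg0 (fun t => hg0 _))).
    by rewrite parg (sum_shift (fun t => hg t ^+ 2)) parg expr2.
  move=> H; apply: (le_trans (ler_sum _ (fun s _ => H s))).
  by rewrite sumr_const card_Fp // -mulr_natl.
have hV : \sum_s V s = (P * gam) ^+ 2.
  rewrite /V exchange_big /=.
  rewrite (eq_bigr (fun t => hg t ^+ 2 * \sum_s hg (s - t) ^+ 2)); last first.
    by move=> t _; rewrite mulr_sumr; apply: eq_bigr => s _; rewrite exprMn.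
  rewrite (eq_bigr (fun t => hg t ^+ 2 * (P * gam))); last first.
    move=> t _; congr (_ * _).
    rewrite -parg.
    rewrite [RHS](reindex_inj (addIr (- t))) /=.
    by apply: eq_bigr => s _.
  by rewrite -mulr_suml parg expr2.
have sumQ : \sum_s Q s <= (P * gam) ^+ 2 + P^-1 * (sqrtC P * (P * (P * gam) ^+ 2) + P * (P * gam) ^+ 2).
  rewrite (bigD1 0) //= Q0 lerD2l.
  apply: (@le_trans _ _ (\sum_(s | s != 0) P^-1 * (sqrtC P * U s ^+ 2 + P * V s))).
    by apply: ler_sum => s s0; exact: Qs.
  apply: (@le_trans _ _ (\sum_s P^-1 * (sqrtC P * U s ^+ 2 + P * V s))).
    rewrite [X in _ <= X](bigD1 0) //= lerDr; exact: B0.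
  rewrite -mulr_sumr big_split /= -!mulr_sumr hV.
  apply: ler_wpM2l; first by rewrite invr_ge0 ltW ?P_gt0.
  rewrite lerD2r; apply: ler_wpM2l; first by rewrite sqrtC_ge0 ltW ?P_gt0.
  exact: hU.
rewrite eS.
apply: (le_trans (ler_wpM2l _ sumQ)); first by rewrite invr_ge0 ltW ?P_gt0.
have Pn := P_neq0.
rewrite !mulrDr.
have -> : P^-1 * (P * gam) ^+ 2 = P * gam ^+ 2 by field.
have -> : P^-1 * (P^-1 * (sqrtC P * (P * (P * gam) ^+ 2))) = sqrtC P * P * gam ^+ 2 by field.
have -> : P^-1 * (P^-1 * (P * (P * gam) ^+ 2)) = P * gam ^+ 2 by field.
rewrite le_eqVlt; apply/orP; left; apply/eqP; ring.
Qed.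

Definition N3 := \sum_x \sum_y ind x * ind (x + y) * ind (x + y ^+ 2).
Definition Lc := \sum_x \sum_y ind x * ind (x + y) * g (x + y ^+ 2).
Definition M (x : F) := \sum_y ind (x + y) * g (x + y ^+ 2).
Definition W := \sum_x `|M x| ^+ 2.

Lemma sum_ind_shift x : \sum_y ind (x + y) = aC.
Proof. by rewrite -sum_ind [RHS](reindex_inj (addrI x)). Qed.

Lemma Lc_eq : Lc = N3 - aC ^+ 3 / P.
Proof.
have e : Lc = N3 - dl * \sum_x \sum_y ind x * ind (x + y).
  rewrite /Lc /N3 mulr_sumr -sumrB; apply: eq_bigr => x _.
  rewrite mulr_sumr -sumrB; apply: eq_bigr => y _.
  by rewrite /g; ring.
rewrite e.
have -> : \sum_x \sum_y ind x * ind (x + y) = aC ^+ 2.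
  rewrite expr2 -{1}sum_ind mulr_suml; apply: eq_bigr => x _.
  by rewrite -mulr_sumr sum_ind_shift.
by rewrite /dl; congr (_ - _); rewrite mulrC mulrA -exprSr.
Qed.

Lemma ind_norm2 x : `|ind x| ^+ 2 = ind x.
Proof. by rewrite ger0_norm ?ind_ge0 // ind_sq. Qed.

Lemma Lc_bound1 : `|Lc| ^+ 2 <= aC * W.
Proof.
have -> : Lc = \sum_x ind x * M x.
  rewrite /Lc /M; apply: eq_bigr => x _; rewrite mulr_sumr.
  by apply: eq_bigr => y _; rewrite mulrA.
apply: (le_trans (@cs_norm F ind M)).
rewrite /W; apply: ler_wpM2r; first by apply: sumr_ge0 => x _; rewrite exprn_ge0.
by rewrite (eq_bigr _ (fun x _ => ind_norm2 x)) sum_ind.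
Qed.

Lemma W_ge0 : 0 <= W.
Proof. by apply: sumr_ge0 => x _; rewrite exprn_ge0. Qed.

Lemma ind_conj x : (ind x)^* = ind x.
Proof. by rewrite /ind conjC_nat. Qed.

Lemma W_eq : W = \sum_u \sum_h ind u * ind (u + h) * K h u.
Proof.
pose T x y h := ind (x + y) * ind (x + (y + h)) * (g (x + y ^+ 2) * g (x + (y + h) ^+ 2)).
have s1 : W = \sum_x \sum_y \sum_h T x y h.
  rewrite /W; apply: eq_bigr => x _.
  rewrite normCK /M rmorph_sum mulr_suml; apply: eq_bigr => y _.
  rewrite mulr_sumr (reindex_inj (addrI y)) /=; apply: eq_bigr => h _.
  rewrite rmorphM /=.
  have h1 := ind_conj (x + (y + h)); have h2 := g_conj (x + (y + h) ^+ 2).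
  rewrite h1 h2 /T; ring.
have s2 : \sum_x \sum_y \sum_h T x y h =
    \sum_y \sum_u \sum_h ind u * ind (u + h) * (g (u - y + y ^+ 2) * g (u - y + (y + h) ^+ 2)).
  rewrite exchange_big /=; apply: eq_bigr => y _.
  rewrite (reindex_inj (addIr (- y))) /=; apply: eq_bigr => u _.
  apply: eq_bigr => h _; rewrite /T.
  have -> : u - y + y = u by rewrite subrK.
  have -> : u - y + (y + h) = u + h by rewrite addrA subrK.
  by [].
rewrite s1 s2 exchange_big /=; apply: eq_bigr => u _.
rewrite exchange_big /=; apply: eq_bigr => h _.
by rewrite /K mulr_sumr.
Qed.

Lemma W_bound : `|W| ^+ 2 <= aC ^+ 2 * S4.
Proof.
rewrite W_eq.
have e : \sum_u \sum_h ind u * ind (u + h) * K h u =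
   \sum_(q : F * F) (ind q.1 * ind (q.1 + q.2)) * K q.2 q.1.
  by rewrite pair_bigA.
rewrite e.
apply: (le_trans (@cs_norm _ (fun q : F * F => ind q.1 * ind (q.1 + q.2)) (fun q => K q.2 q.1))).
have e1 : \sum_(q : F * F) `|ind q.1 * ind (q.1 + q.2)| ^+ 2 = aC ^+ 2.
  rewrite -(pair_bigA _ (fun u h => `|ind u * ind (u + h)| ^+ 2)) /=.
  rewrite (eq_bigr (fun u => ind u * aC)); last first.
    move=> u _; rewrite -(sum_ind_shift u) mulr_sumr; apply: eq_bigr => h _.
    by rewrite normrM exprMn !ind_norm2.
  by rewrite -mulr_suml sum_ind expr2.
have e2 : \sum_(q : F * F) `|K q.2 q.1| ^+ 2 = S4.
  rewrite -(pair_bigA _ (fun u h => `|K h u| ^+ 2)) /=.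
  by rewrite /S4 exchange_big.
by rewrite e1 e2.
Qed.

Lemma pow_mono n (x y : algC) : 0 <= x -> x <= y -> x ^+ n <= y ^+ n.
Proof.
move=> x0 xy; apply: lerXn2r => //; rewrite nnegrE //.
exact: le_trans xy.
Qed.

Lemma aC_ge0 : 0 <= aC.
Proof. by rewrite /aC ler0n. Qed.

Lemma S4_ge0 : 0 <= S4.
Proof. by apply: sumr_ge0 => h _; apply: sumr_ge0 => u _; rewrite exprn_ge0. Qed.

Lemma sqrtP_ge1 : 1 <= sqrtC P.
Proof.
have s0 : 0 <= sqrtC P by rewrite sqrtC_ge0 ltW ?P_gt0.
rewrite -(ler_pXn2r (n:=2)) ?nnegrE // ?ler01 // expr1n sqrtCK /P ler1n.
exact: prime_gt0.
Qed.

Lemma final_bound : `|Lc| ^+ 8 <= 9%:R * P ^+ 3 * aC ^+ 12.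
Proof.
have sP := sqrtP_ge1.
have s0 : 0 <= sqrtC P by exact: le_trans sP.
have P0 : 0 <= P by rewrite ltW ?P_gt0.
have S4b : S4 <= 3%:R * sqrtC P * P * aC ^+ 2.
  apply: (le_trans S4_bound).
  have h1 : 2%:R + sqrtC P <= 3%:R * sqrtC P.
    have -> : 3%:R * sqrtC P = 2%:R * sqrtC P + sqrtC P by ring.
    rewrite lerD2r.
    by rewrite -{1}[2%:R]mulr1 ler_wpM2l ?ler0n.
  have h2 : gam ^+ 2 <= aC ^+ 2 by apply: pow_mono; [exact: gam_ge0 | exact: gam_le].
  apply: (@le_trans _ _ (3%:R * sqrtC P * P * gam ^+ 2)).
    by apply: ler_wpM2r; [exact: exprn_ge0 gam_ge0 | apply: ler_wpM2r].
  apply: ler_wpM2l => //; apply: mulr_ge0 => //; apply: mulr_ge0 => //; exact: ler0n.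
have W2 : W ^+ 2 <= aC ^+ 2 * S4.
  by have := W_bound; rewrite ger0_norm // W_ge0.
have L2 := Lc_bound1.
have a0 := aC_ge0.
have e8 : `|Lc| ^+ 8 = (`|Lc| ^+ 2) ^+ 4 by rewrite -exprM.
rewrite e8.
apply: (@le_trans _ _ ((aC * W) ^+ 4)); first by apply: pow_mono; rewrite ?exprn_ge0.
have e4 : (aC * W) ^+ 4 = aC ^+ 4 * (W ^+ 2) ^+ 2 by rewrite exprMn -exprM.
rewrite e4.
apply: (@le_trans _ _ (aC ^+ 4 * (aC ^+ 2 * S4) ^+ 2)).
  by apply: ler_wpM2l; rewrite ?exprn_ge0 //; apply: pow_mono; rewrite ?exprn_ge0 ?W_ge0.
apply: (@le_trans _ _ (aC ^+ 4 * (aC ^+ 2 * (3%:R * sqrtC P * P * aC ^+ 2)) ^+ 2)).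
  apply: ler_wpM2l; rewrite ?exprn_ge0 //; apply: pow_mono.
    by apply: mulr_ge0; rewrite ?exprn_ge0 ?S4_ge0.
  by apply: ler_wpM2l; rewrite ?exprn_ge0.
rewrite le_eqVlt; apply/orP; left; apply/eqP.
have sq : sqrtC P ^+ 2 = P by rewrite sqrtCK.
have -> : aC ^+ 4 * (aC ^+ 2 * (3%:R * sqrtC P * P * aC ^+ 2)) ^+ 2 =
   9%:R * sqrtC P ^+ 2 * P ^+ 2 * aC ^+ 12 by ring.
by rewrite sq; ring.
Qed.

Lemma card_TP : ((num_triplets A)%:R : algC) =
  \sum_x \sum_y ((y != 0) && ((x \in A) && (x + y \in A) && (x + y ^+ 2 \in A)))%:R.
Proof.
rewrite /num_triplets -sum1_card big_mkcond natr_sum /=.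
rewrite [RHS]pair_bigA /=; apply: eq_bigr => [[x y]] _ /=.
rewrite /triplet_pairs inE /=.
by case: (y != 0); case: (x \in A); case: (x + y \in A); case: (x + y ^+ 2 \in A).
Qed.

Lemma N3_eq : N3 = (num_triplets A + #|A|)%:R.
Proof.
rewrite natrD card_TP -/aC -sum_ind -big_split /=.
rewrite /N3; apply: eq_bigr => x _.
rewrite (bigD1 0) //= [X in _ = X + _](bigD1 0) //=.
have t0 : ind x * ind (x + 0) * ind (x + 0 ^+ 2) = ind x.
  by rewrite expr0n /= addr0 /ind; case: (x \in A); rewrite ?mul0r ?mulr1.
have c0 : (((0 : F) != 0) && ((x \in A) && (x + 0 \in A) && (x + 0 ^+ 2 \in A)))%:R = 0 :> algC.
  by rewrite eqxx.
have rest : \sum_(y | y != 0) ind x * ind (x + y) * ind (x + y ^+ 2) =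
    \sum_(y | y != 0) ((y != 0) && ((x \in A) && (x + y \in A) && (x + y ^+ 2 \in A)))%:R.
  apply: eq_bigr => y y0.
  by rewrite /ind y0 /=; case: (x \in A); case: (x + y \in A); case: (x + y ^+ 2 \in A);
    rewrite ?mul0r ?mulr0 ?mul1r ?mulr1.
rewrite t0 c0 rest add0r addrC //.
Qed.

Lemma bridge : (expn (expn #|A| 3 - p * (num_triplets A + #|A|)) 8 <= 9 * expn p 11 * expn #|A| 12)%nat.
Proof.
set T := num_triplets A; set a := #|A|.
set Y := (p * (T + a))%nat.
have hL := final_bound.
rewrite Lc_eq N3_eq in hL.
have eY : P * ((T + a)%:R - aC ^+ 3 / P) = Y%:R - (expn a 3)%:R.
  rewrite mulrBr mulrCA mulfV ?P_neq0 // mulr1 /Y natrM natrX /P /aC //.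
have hB : `|Y%:R - ((expn a 3))%:R| ^+ 8 <= ((9 * expn p 11 * expn a 12)%nat)%:R :> algC.
  rewrite -eY normrM exprMn (ger0_norm (ltW P_gt0)).
  apply: (@le_trans _ _ (P ^+ 8 * (9%:R * P ^+ 3 * aC ^+ 12))).
    apply: ler_wpM2l; first by rewrite exprn_ge0 // ltW // P_gt0.
    exact: hL.
  rewrite le_eqVlt; apply/orP; left; apply/eqP.
  by rewrite (natrM _ (9 * expn p 11)) (natrM _ 9) !natrX /P /aC; ring.
rewrite -(ler_nat algC) natrX.
apply: le_trans hB.
case: (leqP Y (expn a 3)) => hY.
  rewrite natrB // distrC ger0_norm //.
  by rewrite subr_ge0 ler_nat.
have -> : (expn a 3 - Y)%nat = 0%nat by apply/eqP; rewrite subn_eq0 ltnW.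
by rewrite expr0n /= exprn_ge0.
Qed.
End Fourier.

Theorem corollary1p2 :
  exists c1 c2 : R, (0 < c1)%R /\ (0 < c2)%R /\
  forall (p : nat) (A : {set 'F_p}),
    prime p ->
    let delta := (INR #|A| / INR p)%R in
    (delta > c1 * Rpower (INR p) (- (1 / 15)))%R ->
    (exists x y : 'F_p, [/\ y != 0%mcR, x \in A, (x + y)%mcR \in A & (x + y ^+ 2)%mcR \in A])
    /\ (INR (num_triplets A) >= c2 * delta ^ 3 * (INR p) ^ 2)%R.
Proof.
exists 4%R, (1/2)%R; split; first exact: four_pos; split; first exact: half_pos.
move=> p A pP delta Hd.
have p0 : (0 < p)%N := prime_gt0 pP.
have x0 : (0 < INR p)%R by apply: lt_0_INR; apply/ssrnat.ltP.
have h15 := hyp_to_nat p #|A| x0 Hd.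
have hap : (#|A| <= p)%N by move: (max_card A); rewrite (card_Fp pP).
have a0 : (0 < #|A|)%N.
  move: h15; case: #|A| => //; by rewrite exp0n // ltn0.
have p2 : (2 < p)%N.
  have e1 : (expn #|A| 15 <= p * expn p 14)%N by rewrite -expnS leq_exp2r.
  have e2 : (expn 4 15 * expn p 14 < p * expn p 14)%N := leq_trans h15 e1.
  rewrite ltn_pmul2r ?expn_gt0 ?p0 // in e2.
  apply: leq_trans e2.
  apply: (@leq_trans 4) => //; by rewrite -{1}(expn1 4) leq_pexp2l.
have [z zP] := C_prim_root_exists p0.
have hb := bridge p pP p2 z zP A.
have hT := nat_final2 _ _ _ hap h15 hb.
split.
  have T0 : (0 < num_triplets A)%N.
    rewrite lt0n; apply/negP => /eqP T0; move: hT; rewrite T0 muln0 leqn0 expn_eq0 andbT => /eqP A0.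
    by rewrite A0 in a0.
  move/card_gt0P: T0 => [[x y]]; rewrite /triplet_pairs inE /= => /and4P [h1 h2 h3 h4].
  by exists x, y; split.
rewrite /delta.
have hR : (INR #|A| ^ 3 <= 2 * INR p * INR (num_triplets A))%R.
  rewrite -INR_expn -[(2 * INR p)%R]/(INR 2 * INR p)%R -!mult_INR.
  by apply: le_INR; apply/ssrnat.leP.
exact: real_final x0 hR.
Qed.
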